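(* Let $d\in\mathbb{N}$ and let $\mathcal{S}$ be a dictionary of words in $\Sigma^L$. If there exists an origin word for $\mathcal{S}$ that is not good, then there is no $c\in\Sigma^L$ with $\mathrm{dist}(c,s)\le d$ for all $s\in\mathcal{S}$.
   Context: $\mathrm{dist}$ denotes Hamming distance. An origin word for $\mathcal{S}$ is a word $o\in\Sigma^L$ such that for every position $i\in\{1,\ldots,L\}$, $|\{s\in\mathcal{S}: s[i]=o[i]\}|\ge |\mathcal{S}|/(2|\Sigma|)$. An origin word $o$ is good if $\mathrm{dist}(o,s)\le 4|\Sigma|d$ for every $s\in\mathcal{S}$. *)

(* Defs.v *)
From mathcomp Require Import all_boot.
Set Implicit Arguments. Unset Strict Implicit. Unset Printing Implicit Defensive.

Definition word (Sigma : finType) (L : nat) := (L.-tuple Sigma).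

Definition dist (Sigma : finType) (L : nat) (u v : word Sigma L) : nat :=
  #|[set i : 'I_L | tnth u i != tnth v i]|.

(* o is an origin word for S: for every position i,
   |{s in S : s[i] = o[i]}| >= |S| / (2|Sigma|), stated without division as
   2|Sigma| * |{s in S : s[i] = o[i]}| >= |S|. *)
Definition origin_word (Sigma : finType) (L : nat)
    (S : {set word Sigma L}) (o : word Sigma L) : Prop :=
  forall i : 'I_L,
    #|S| <= 2 * #|Sigma| * #|[set s in S | tnth s i == tnth o i]|.

Definition good (Sigma : finType) (L : nat) (d : nat)
    (S : {set word Sigma L}) (o : word Sigma L) : Prop :=
  origin_word S o /\ forall s, s \in S -> dist o s <= 4 * #|Sigma| * d.

(* Main.v *)
Require Import Defs.
From mathcomp Require Import all_boot.
From mathcomp Require Import zify.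

Lemma card_sum_pred (T : finType) (A : {set T}) (P : pred T) :
  #|[set x in A | P x]| = \sum_(x in A) (P x : nat).
Proof.
rewrite -sum1_card big_mkcond [RHS]big_mkcond; apply: eq_bigr => x _.
by rewrite !inE; case: (x \in A); case: (P x).
Qed.

Theorem lemma9 (Sigma : finType) (L d : nat) (S : {set word Sigma L}) :
  (exists o : word Sigma L, origin_word S o /\ ~ good d S o) ->
  ~ (exists c : word Sigma L, forall s, s \in S -> dist c s <= d).
Proof.
move=> [o [Ho Hng]] [c Hc].
have Htri : forall s, dist o s <= dist o c + dist c s.
  move=> s; rewrite /dist.
  apply: leq_trans (leq_card_setU _ _).
  apply: subset_leq_card; apply/subsetP => i; rewrite !inE => H.
  by case: eqP => // E; rewrite E in H; rewrite H orbT.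
have Hkey : #|S| * dist o c <= 2 * #|Sigma| * (#|S| * d).
  rewrite /dist mulnC -sum_nat_const.
  apply: (@leq_trans (\sum_(i in [set i | tnth o i != tnth c i])
           2 * #|Sigma| * #|[set s in S | tnth c i != tnth s i]|)).
    apply: leq_sum => i; rewrite inE => Hi.
    apply: leq_trans (Ho i) _; rewrite leq_mul2l; apply/orP; right.
    apply: subset_leq_card; apply/subsetP => s; rewrite !inE => /andP [-> /eqP ->].
    by rewrite eq_sym.
  rewrite -big_distrr /= leq_mul2l; apply/orP; right.
  apply: (@leq_trans (\sum_i #|[set s in S | tnth c i != tnth s i]|)).
    by rewrite big_mkcond /=; apply: leq_sum => i _; case: (_ \in _).
  under eq_bigr => i _ do rewrite card_sum_pred.
  rewrite exchange_big /= -sum_nat_const; apply: leq_sum => s Hs.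
  apply: leq_trans (Hc s Hs) => /=; rewrite /dist.
  rewrite -sum1_card [X in _ <= X]big_mkcond /=.
  by apply: leq_sum => i _; rewrite inE; case: (_ != _).
apply: Hng; split => // s Hs.
have Hpos : 0 < #|S| by apply/card_gt0P; exists s.
have Hoc : dist o c <= 2 * #|Sigma| * d.
  by move: Hkey; rewrite mulnCA leq_pmul2l.
case: (posnP #|Sigma|) => [H0|HS].
  rewrite /dist; apply: leq_trans (_ : _ <= 0) _ => //.
  rewrite leqn0 cards_eq0; apply/eqP/setP => i.
  by have := card0_eq H0 (tnth o i); rewrite inE.
have := Htri s; have := Hc s Hs; nia.
Qed.
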